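(* Consider a mixture of two Bernoullis with the notation below, and let $T:=\{\boldsymbol\lambda: Z_1(\boldsymbol\lambda)<1\}$. The one-cluster regions $(\pi_1,\boldsymbol\mu_1,\boldsymbol\mu_2)$ with $\boldsymbol\lambda(\boldsymbol\mu_1)\in T$, $\boldsymbol\mu_2=\overline{\mathbf x}$ and $\pi_1=0$ are attractive for GD, given a small enough step size.
   Context: Model and data: - Let $B(\mathbf x\mid\boldsymbol\mu)=\prod_{i=1}^D\mu_i^{x_i}(1-\mu_i)^{1-x_i}$ for $\mathbf x\in\{0,1\}^D$ and $\boldsymbol\mu\in[0,1]^D$. - The true distribution is $p^*(\mathbf x)=\pi_1^*B(\mathbf x\mid\boldsymbol\mu_1^* )+\pi_2^*B(\mathbf x\mid\boldsymbol\mu_2^* )$ with $\pi_1^*\in(0,1)$ and $\pi_2^*=1-\pi_1^*$. - The model is $p(\mathbf x\mid\theta)=\pi_1B(\mathbf x\mid\boldsymbol\mu_1)+\pi_2B(\mathbf x\mid\boldsymbol\mu_2)$. Notation: - $\overline{\mathbf x}=\mathbb E_{p^*}[\mathbf x]$ and $S_i=\overline x_i(1-\overline x_i)$. - $\boldsymbol\mu^*=(\boldsymbol\mu_1^*-\boldsymbol\mu_2^* )/2$. - With $\mathbf b=\boldsymbol\mu_1-\overline{\mathbf x}$, define the affine map $\boldsymbol\lambda(\boldsymbol\mu_1)$ by $\lambda_i=2S_i^{-1}\mu_i^*b_i$. - $Z_1(\boldsymbol\lambda)=\pi_1^*\prod_{i=1}^D(1+\pi_2^*\lambda_i)+\pi_2^*\prod_{i=1}^D(1-\pi_1^*\lambda_i)$.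 This equals $\int p^*(\mathbf x)B(\mathbf x\mid\boldsymbol\mu_1)/B(\mathbf x\mid\overline{\mathbf x})$, the leading-order (as $\pi_1\to0$) value of $Z_1=\mathbb E_{p^*}[B(\mathbf x\mid\boldsymbol\mu_1)/p(\mathbf x\mid\theta)]$ when $\boldsymbol\mu_2=\overline{\mathbf x}$. GD: - GD is projected gradient ascent on $\mathbb E_{p^*}[\log p(\mathbf x\mid\theta)]$ with step size $\alpha$, with the mixing coefficients Euclidean-projected onto the simplex. - In this regime it updates $(\pi_1,\pi_2)\leftarrow(\pi_1+\tfrac\alpha2(Z_1-1),\pi_2-\tfrac\alpha2(Z_1-1))$ and $\boldsymbol\mu_2\leftarrow\boldsymbol\mu_2+\alpha\Sigma_2^{-1}(\overline{\mathbf x}-\boldsymbol\mu_2)$. - $\boldsymbol\mu_1$ moves by an amount proportional to $\pi_1$. Attractive means that GD initialized near such a configuration (with $\pi_1$ small) converges to a configuration with $\pi_1=0$. Standing assumption: $\sigma_{ij}=4\pi_1^*\pi_2^*\mu_i^*\mu_j^*\neq0$ for all $i\neq j$. *)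

(* Defs.v *)
From HB Require Import structures.
From mathcomp Require Import all_boot all_order all_algebra.
From mathcomp Require Import all_classical all_reals all_analysis.
Import Order.TTheory GRing.Theory Num.Theory.
Set Implicit Arguments. Unset Strict Implicit. Unset Printing Implicit Defensive.
Local Open Scope ring_scope.

Section BernMix.
Variables (R : realType) (D : nat).

Definition point := {ffun 'I_D -> bool}.

Definition bern (x : point) (mu : 'I_D -> R) : R :=
  \prod_(i < D) (if x i then mu i else 1 - mu i).

Definition pstar (pis : R) (mu1s mu2s : 'I_D -> R) (x : point) : R :=
  pis * bern x mu1s + (1 - pis) * bern x mu2s.

Definition pmodel (pi1 pi2 : R) (mu1 mu2 : 'I_D -> R) (x : point) : R :=
  pi1 * bern x mu1 + pi2 * bern x mu2.

Definition loglik (pis : R) (mu1s mu2s : 'I_D -> R)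
    (pi1 pi2 : R) (mu1 mu2 : 'I_D -> R) : R :=
  \sum_(x : point) pstar pis mu1s mu2s x * ln (pmodel pi1 pi2 mu1 mu2 x).

Definition xbar (pis : R) (mu1s mu2s : 'I_D -> R) (i : 'I_D) : R :=
  \sum_(x : point) pstar pis mu1s mu2s x * (x i)%:R.

Definition Svar (pis : R) (mu1s mu2s : 'I_D -> R) (i : 'I_D) : R :=
  xbar pis mu1s mu2s i * (1 - xbar pis mu1s mu2s i).

Definition mustar (mu1s mu2s : 'I_D -> R) (i : 'I_D) : R := (mu1s i - mu2s i) / 2.

Definition lambda (pis : R) (mu1s mu2s : 'I_D -> R) (mu1 : 'I_D -> R) (i : 'I_D) : R :=
  2 * (Svar pis mu1s mu2s i)^-1 * mustar mu1s mu2s i * (mu1 i - xbar pis mu1s mu2s i).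

Definition Z1lam (pis : R) (lam : 'I_D -> R) : R :=
  pis * \prod_(i < D) (1 + (1 - pis) * lam i)
  + (1 - pis) * \prod_(i < D) (1 - pis * lam i).

Definition setc (f : 'I_D -> R) (i : 'I_D) (t : R) : 'I_D -> R :=
  fun j => if j == i then t else f j.

(* Euclidean projection of (a, b) onto the simplex {(s,t) | s,t >= 0, s+t = 1};
   returns the first coordinate s (the second one is 1 - s). *)
Definition proj_simplex1 (a b : R) : R :=
  Num.max 0 (Num.min 1 ((a - b + 1) / 2)).

(* GD state: (pi1, mu1, mu2); pi2 = 1 - pi1 on the simplex *)
Definition state := (R * ('I_D -> R) * ('I_D -> R))%type.

(* One step of projected gradient ascent with step size alpha on
   loglik, where the gradient is taken w.r.t. (pi1, pi2, mu1, mu2) as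
   independent variables and (pi1, pi2) is projected onto the simplex. *)
Definition gd_step (pis : R) (mu1s mu2s : 'I_D -> R) (alpha : R) (th : state) : state :=
  let: (pi1, mu1, mu2) := th in
  let L := loglik pis mu1s mu2s in
  let pi2 := 1 - pi1 in
  let g1 := derive1 (fun t => L t pi2 mu1 mu2) pi1 in
  let g2 := derive1 (fun t => L pi1 t mu1 mu2) pi2 in
  let mu1' := fun i => mu1 i + alpha * derive1 (fun t => L pi1 pi2 (setc mu1 i t) mu2) (mu1 i) in
  let mu2' := fun i => mu2 i + alpha * derive1 (fun t => L pi1 pi2 mu1 (setc mu2 i t)) (mu2 i) in
  (proj_simplex1 (pi1 + alpha * g1) (pi2 + alpha * g2), mu1', mu2').

Definition gd_iter (pis : R) (mu1s mu2s : 'I_D -> R) (alpha : R) (n : nat) (th : state) : state :=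
  iter n (gd_step pis mu1s mu2s alpha) th.

End BernMix.

(* Main.v *)
Require Import Defs.
From HB Require Import structures.
From mathcomp Require Import all_boot all_order all_algebra.
From mathcomp Require Import all_classical all_reals all_analysis.
From mathcomp Require Import ring lra.
Import Order.TTheory GRing.Theory Num.Theory numFieldNormedType.Exports.
Local Open Scope classical_set_scope.
Local Open Scope ring_scope.



Section Aux.
Variable R : realType.

Lemma is_derive_sum_seq (I : Type) (r : seq I) (h : I -> R -> R) (dh : I -> R) (t0 : R) :
  (forall i, is_derive t0 1 (h i) (dh i)) ->
  is_derive t0 1 (fun t => \sum_(i <- r) h i t) (\sum_(i <- r) dh i).
Proof.
move=> H; elim: r => [|a r IH].
  rewrite big_nil.
  have -> : (fun t : R => \sum_(i <- [::]) h i t) = cst 0 by apply/funext=> t; rewrite big_nil.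
  exact: is_derive_cst.
have -> : (fun t : R => \sum_(i <- a :: r) h i t) = (h a + (fun t => \sum_(i <- r) h i t))%R.
  by apply/funext=> t; rewrite big_cons.
rewrite big_cons; exact: is_deriveD.
Qed.

Lemma is_derive_lnaff (c a b t0 : R) : 0 < a * t0 + b ->
  is_derive t0 1 (fun t => c * ln (a * t + b)) (c * (a / (a * t0 + b))).
Proof.
move=> hp.
have h1 : is_derive t0 1 (fun t : R => a * t + b) a.
  have hid : is_derive t0 (1:R) (@id R) 1 by apply: is_derive_id.
  have hz := @is_deriveZ R R R (@id R) a t0 1 1 hid.
  have hc : is_derive t0 (1:R) (cst b) 0 by apply: is_derive_cst.
  have := is_deriveD hz hc.
  by rewrite /GRing.scale /= mulr1 addr0.
have h2 := @is_derive1_comp R (@ln R) (fun t => a * t + b) t0 _ _ (is_derive1_ln hp) h1.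
have := @is_deriveZ R R R _ c t0 1 _ h2.
by rewrite /GRing.scale /= [a / _]mulrC.
Qed.

Lemma derive1_sumln (I : finType) (c : I -> R) (f : I -> R -> R) (a b : I -> R) (t0 : R) :
  (forall i t, f i t = a i * t + b i) -> (forall i, 0 < f i t0) ->
  derive1 (fun t => \sum_(i : I) c i * ln (f i t)) t0 = \sum_(i : I) c i * (a i / f i t0).
Proof.
move=> hf hp.
have H : forall i, is_derive t0 1 (fun t => c i * ln (f i t)) (c i * (a i / f i t0)).
  move=> i.
  have -> : f i = fun t => a i * t + b i by apply/funext=> t; rewrite hf.
  apply: is_derive_lnaff; by rewrite -hf.
have HS := @is_derive_sum_seq I (index_enum I) _ _ t0 H.
by rewrite derive1E (@derive_val _ _ _ _ _ _ _ HS).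
Qed.

End Aux.



Ltac neq0 := repeat (apply/andP; split); apply/eqP => ?; lra.

Section Model.
Variables (R : realType) (D : nat) (pis : R) (mu1s mu2s : 'I_D -> R).

Local Notation pst := (pstar pis mu1s mu2s).
Local Notation xb := (xbar pis mu1s mu2s).

Definition pm (s : state R D) (x : Defs.point D) : R :=
  s.1.1 * bern x s.1.2 + (1 - s.1.1) * bern x s.2.
Definition Pi (x : Defs.point D) (mu : 'I_D -> R) (i : 'I_D) : R :=
  \prod_(j < D | j != i) (if x j then mu j else 1 - mu j).
Definition dbern (x : Defs.point D) (mu : 'I_D -> R) (i : 'I_D) : R :=
  Pi x mu i * (if x i then 1 else -1).
Definition G1 (s : state R D) : R := \sum_(x : Defs.point D) pst x * (bern x s.1.2 / pm s x).
Definition G2 (s : state R D) : R := \sum_(x : Defs.point D) pst x * (bern x s.2 / pm s x).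
Definition M1 (s : state R D) (i : 'I_D) : R :=
  \sum_(x : Defs.point D) pst x * (s.1.1 * dbern x s.1.2 i / pm s x).
Definition M2 (s : state R D) (i : 'I_D) : R :=
  \sum_(x : Defs.point D) pst x * ((1 - s.1.1) * dbern x s.2 i / pm s x).
Definition estep (al : R) (s : state R D) : state R D :=
  (proj_simplex1 (s.1.1 + al * G1 s) ((1 - s.1.1) + al * G2 s),
   fun i => s.1.2 i + al * M1 s i, fun i => s.2 i + al * M2 s i).
Definition Hf (al : R) (s : state R D) : R := s.1.1 + al * (G1 s - G2 s) / 2.

Lemma bern_split x mu i : bern x mu = (if x i then mu i else 1 - mu i) * Pi x mu i.
Proof. by rewrite /bern (bigD1 i). Qed.

Lemma setc_id (mu : 'I_D -> R) i : setc mu i (mu i) = mu.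
Proof. by apply/funext=> j; rewrite /setc; case: eqP => // ->. Qed.

Lemma bern_setc x mu i t :
  bern x (setc mu i t) = dbern x mu i * t + (if x i then 0 else Pi x mu i).
Proof.
rewrite (bern_split _ _ i) /dbern.
have -> : Pi x (setc mu i t) i = Pi x mu i.
  by apply: eq_bigr => j /negbTE hj; rewrite /setc hj.
rewrite /setc eqxx; case: (x i); ring.
Qed.

Lemma step_eq al s : (forall x, 0 < pm s x) ->
  gd_step pis mu1s mu2s al s = estep al s.
Proof.
case: s => [[p m1] m2] /= hpos.
rewrite /gd_step /loglik /estep /=.
rewrite (@derive1_sumln R _ (fun x => pst x) (fun x t => pmodel t (1 - p) m1 m2 x)
   (fun x => bern x m1) (fun x => (1 - p) * bern x m2) p); last 2 first.
- by move=> x t; rewrite /pmodel; ring.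
- by move=> x; apply: hpos.
rewrite (@derive1_sumln R _ (fun x => pst x) (fun x t => pmodel p t m1 m2 x)
   (fun x => bern x m2) (fun x => p * bern x m1) (1 - p)); last 2 first.
- by move=> x t; rewrite /pmodel; ring.
- by move=> x; apply: hpos.
congr (_, _, _).
- apply/funext=> i.
  rewrite (@derive1_sumln R _ (fun x => pst x) (fun x t => pmodel p (1 - p) (setc m1 i t) m2 x)
   (fun x => p * dbern x m1 i) (fun x => p * (if x i then 0 else Pi x m1 i) + (1 - p) * bern x m2) (m1 i)); last 2 first.
  + by move=> x t; rewrite /pmodel bern_setc mulrDr mulrA addrA.
  + by move=> x; rewrite setc_id; apply: hpos.
  by rewrite setc_id.
- apply/funext=> i.
  rewrite (@derive1_sumln R _ (fun x => pst x) (fun x t => pmodel p (1 - p) m1 (setc m2 i t) x)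
   (fun x => (1 - p) * dbern x m2 i) (fun x => (1 - p) * (if x i then 0 else Pi x m2 i) + p * bern x m1) (m2 i)); last 2 first.
  + by move=> x t; rewrite /pmodel bern_setc; move: (if _ then _ else _) (dbern _ _ _) (bern _ _) => c d e; ring.
  + by move=> x; rewrite setc_id; apply: hpos.
  by rewrite setc_id.
Qed.


Lemma sum_prodF (F : 'I_D -> bool -> R) :
  \sum_(x : Defs.point D) \prod_(i < D) F i (x i) = \prod_(i < D) (F i true + F i false).
Proof.
rewrite -(bigA_distr_bigA F); apply: eq_bigr => i _; by rewrite big_bool.
Qed.

Lemma sum_bern (mu : 'I_D -> R) : \sum_(x : Defs.point D) bern x mu = 1.
Proof.
rewrite /bern (sum_prodF (fun i b => if b then mu i else 1 - mu i)).
by apply: big1 => i _; rewrite addrC subrK.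
Qed.

Lemma sum_bern_xi (mu : 'I_D -> R) i : \sum_(x : Defs.point D) bern x mu * (x i)%:R = mu i.
Proof.
have E : forall x : Defs.point D, bern x mu * (x i)%:R =
    \prod_(j < D) ((if x j then mu j else 1 - mu j) * (if j == i then (x j)%:R else 1)).
  move=> x; rewrite big_split /= -big_mkcond /= big_pred1_eq //.
rewrite (eq_bigr _ (fun x _ => E x)).
rewrite (sum_prodF (fun j b => (if b then mu j else 1 - mu j) * (if j == i then b%:R else 1))).
rewrite (bigD1 i) //= eqxx big1 ?mulr1 ?mul1r ?mulr0 ?addr0 //.
by move=> j /negbTE ->; rewrite !mulr1 addrC subrK.
Qed.

Lemma sum_pst : \sum_(x : Defs.point D) pst x = 1.
Proof.
rewrite /pstar big_split /= -!mulr_sumr !sum_bern; ring.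
Qed.

Lemma xbar_eq i : xb i = pis * mu1s i + (1 - pis) * mu2s i.
Proof.
rewrite /xbar /pstar.
rewrite (eq_bigr (fun x => pis * (bern x mu1s * (x i)%:R) + (1 - pis) * (bern x mu2s * (x i)%:R))); last first.
  by move=> x _; rewrite mulrDl !mulrA.
by rewrite big_split /= -!mulr_sumr !sum_bern_xi.
Qed.

Lemma bern_gt0 x (mu : 'I_D -> R) : (forall j, 0 < mu j < 1) -> 0 < bern x mu.
Proof.
move=> h; apply: prodr_gt0 => j _; case: (x j); have := h j; case/andP=> ? ?; lra.
Qed.

Lemma Pi_gt0 x (mu : 'I_D -> R) i : (forall j, 0 < mu j < 1) -> 0 < Pi x mu i.
Proof.
move=> h; apply: prodr_gt0 => j _; case: (x j); have := h j; case/andP=> ? ?; lra.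
Qed.


Lemma pm0 (m y : 'I_D -> R) x : pm (0, m, y) x = bern x y.
Proof. by rewrite /pm /= mul0r add0r subr0 mul1r. Qed.

Lemma M1_zero (m y : 'I_D -> R) i : M1 (0, m, y) i = 0.
Proof. by rewrite /M1 big1 // => x _; rewrite /= mul0r mul0r mulr0. Qed.

Lemma M2_zero (m y : 'I_D -> R) i : (forall j, 0 < y j < 1) ->
  M2 (0, m, y) i = (xb i - y i) / (y i * (1 - y i)).
Proof.
move=> hy.
have hyi := hy i; case/andP: hyi => hy0 hy1.
have E : forall x : Defs.point D, pst x * ((1 - (0:R)) * dbern x y i / pm ((0:R), m, y) x)
   = pst x * (- (1 - y i)^-1) + ((y i)^-1 + (1 - y i)^-1) * (pst x * (x i)%:R).
  move=> x; rewrite pm0 /= subr0 mul1r /dbern (bern_split x y i).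
  have hP := Pi_gt0 x y i hy.
  case: (x i) => /=.
  - by rewrite mulr1; field; neq0.
  - by rewrite mulr0; field; neq0.
rewrite /M2 (eq_bigr _ (fun x _ => E x)) big_split /= -mulr_suml -mulr_sumr sum_pst.
rewrite /xbar; field; neq0.
Qed.

Lemma G2_zero (m y : 'I_D -> R) : (forall j, 0 < y j < 1) -> G2 (0, m, y) = 1.
Proof.
move=> hy; rewrite /G2 -[RHS]sum_pst; apply: eq_bigr => x _.
rewrite pm0 /= divff ?mulr1 //; exact: lt0r_neq0 (bern_gt0 x y hy).
Qed.

Lemma ratio_prod (a m n : 'I_D -> R) (x : Defs.point D) :
  bern x a * bern x m / bern x n =
  \prod_(j < D) ((if x j then a j else 1 - a j) * (if x j then m j else 1 - m j)
                  / (if x j then n j else 1 - n j)).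
Proof. by rewrite /bern -prodfV -!big_split. Qed.

Lemma G1_zero (m : 'I_D -> R) : (forall j, 0 < xb j < 1) ->
  G1 (0, m, xb) = Z1lam pis (lambda pis mu1s mu2s m).
Proof.
move=> hx.
rewrite /G1 (eq_bigr (fun x => pis * (bern x mu1s * bern x m / bern x xb) +
     (1 - pis) * (bern x mu2s * bern x m / bern x xb))); last first.
  by move=> x _; rewrite pm0 /= /pstar; ring.
rewrite big_split /= -!mulr_sumr.
rewrite (eq_bigr _ (fun x _ => ratio_prod mu1s m xb x)).
rewrite (eq_bigr _ (fun x _ => ratio_prod mu2s m xb x)).
rewrite (sum_prodF (fun j b => (if b then mu1s j else 1 - mu1s j) * (if b then m j else 1 - m j)
                  / (if b then xb j else 1 - xb j))).
rewrite (sum_prodF (fun j b => (if b then mu2s j else 1 - mu2s j) * (if b then m j else 1 - m j)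
                  / (if b then xb j else 1 - xb j))).
rewrite /Z1lam; congr (_ * _ + _ * _); apply: eq_bigr => j _ /=;
  rewrite /lambda /Svar /mustar; have := hx j; have := xbar_eq j;
  move: (xb j) => X hX /andP [hX0 hX1]; rewrite hX in hX0 hX1 *; field;
  neq0.
Qed.

End Model.



Section Cont.
Variables (R : realType) (D : nat) (pis : R) (mu1s mu2s : 'I_D -> R) (mu10 : 'I_D -> R).
Local Notation pst := (pstar pis mu1s mu2s).
Local Notation xb := (xbar pis mu1s mu2s).

Definition close (d : R) (s : state R D) : Prop :=
  `|s.1.1| < d /\ (forall i, `|s.1.2 i - mu10 i| < d) /\ (forall i, `|s.2 i - xb i| < d).

Definition FF : set_system (state R D) :=
  filter_from [set d : R | 0 < d] (fun d => [set s | close d s]).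

Lemma close_le d d' s : d <= d' -> close d s -> close d' s.
Proof.
move=> hd [h1 [h2 h3]]; split; [|split].
- exact: lt_le_trans hd.
- by move=> i; apply: lt_le_trans (h2 i) hd.
- by move=> i; apply: lt_le_trans (h3 i) hd.
Qed.

Instance FF_filter : Filter FF.
Proof.
apply: filter_from_filter; first by exists 1; rewrite /= ltr01.
move=> i j hi hj; exists (Num.min i j); first by rewrite /= lt_min hi hj.
move=> s hs; split.
- by apply: close_le hs; rewrite ge_min lexx.
- by apply: close_le hs; rewrite ge_min lexx orbT.
Qed.

Lemma nearFF (P : state R D -> Prop) :
  (\forall s \near FF, P s) -> exists2 d, 0 < d & forall s, close d s -> P s.
Proof. by case=> d hd hsub; exists d => // s hs; apply: hsub. Qed.

Lemma cvg_p1 : (fun s : state R D => s.1.1) @ FF --> (0 : R).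
Proof.
apply/cvgrPdist_lt => e he; exists e => // s [h _].
by rewrite /= sub0r normrN.
Qed.

Lemma cvg_m1 i : (fun s : state R D => s.1.2 i) @ FF --> mu10 i.
Proof.
apply/cvgrPdist_lt => e he; exists e => // s [_ [h _]].
by rewrite /= distrC; apply: h.
Qed.

Lemma cvg_m2 i : (fun s : state R D => s.2 i) @ FF --> xb i.
Proof.
apply/cvgrPdist_lt => e he; exists e => // s [_ [_ h]].
by rewrite /= distrC; apply: h.
Qed.

Lemma cvgc (c : R) : (fun _ : state R D => c) @ FF --> c.
Proof. exact: cvg_cst. Qed.

Lemma cvgD' (f g : state R D -> R) (a b : R) : f @ FF --> a -> g @ FF --> b ->
  (fun s => f s + g s) @ FF --> a + b.
Proof. move=> hf hg; exact: cvgD. Qed.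

Lemma cvgB' (f g : state R D -> R) (a b : R) : f @ FF --> a -> g @ FF --> b ->
  (fun s => f s - g s) @ FF --> a - b.
Proof. move=> hf hg; exact: cvgB. Qed.

Lemma cvgM' (f g : state R D -> R) (a b : R) : f @ FF --> a -> g @ FF --> b ->
  (fun s => f s * g s) @ FF --> a * b.
Proof. move=> hf hg; exact: cvgM. Qed.

Lemma cvgV' (f : state R D -> R) (a : R) : a != 0 -> f @ FF --> a ->
  (fun s => (f s)^-1) @ FF --> a^-1.
Proof. move=> ha hf; exact: cvgV. Qed.

Arguments cvgD' {f g a b}.
Arguments cvgB' {f g a b}.
Arguments cvgM' {f g a b}.
Arguments cvgV' {f a}.

Lemma cvg_prod_seq (I : Type) (r : seq I) (P : pred I) (f : I -> state R D -> R) (l : I -> R) :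
  (forall i, f i @ FF --> l i) ->
  (fun s => \prod_(i <- r | P i) f i s) @ FF --> \prod_(i <- r | P i) l i.
Proof.
move=> H; elim: r => [|a r IH].
  rewrite big_nil; under eq_fun do rewrite big_nil; exact: cvgc.
rewrite big_cons; under eq_fun do rewrite big_cons.
case: (P a); last exact: IH.
exact: cvgM'.
Qed.

Lemma cvg_sum_seq (I : Type) (r : seq I) (P : pred I) (f : I -> state R D -> R) (l : I -> R) :
  (forall i, f i @ FF --> l i) ->
  (fun s => \sum_(i <- r | P i) f i s) @ FF --> \sum_(i <- r | P i) l i.
Proof.
move=> H; elim: r => [|a r IH].
  rewrite big_nil; under eq_fun do rewrite big_nil; exact: cvgc.
rewrite big_cons; under eq_fun do rewrite big_cons.
case: (P a); last exact: IH.
exact: cvgD'.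
Qed.


Local Notation G1' := (@G1 R D pis mu1s mu2s).
Local Notation G2' := (@G2 R D pis mu1s mu2s).
Local Notation M1' := (@M1 R D pis mu1s mu2s).
Local Notation M2' := (@M2 R D pis mu1s mu2s).
Local Notation pm' := (@pm R D).
Local Notation FF' := FF.

Definition s0 : state R D := ((0:R), mu10, xb).

Lemma cvg_bern1 x : (fun s : state R D => bern x s.1.2) @ FF' --> bern x mu10.
Proof.
rewrite /bern; apply: (@cvg_prod_seq _ _ _ (fun i (s : state R D) => if x i then s.1.2 i else 1 - s.1.2 i) _) => i.
case: (x i); first exact: cvg_m1.
exact: cvgB' (cvgc _) (cvg_m1 i).
Qed.

Lemma cvg_bern2 x : (fun s : state R D => bern x s.2) @ FF' --> bern x xb.
Proof.
rewrite /bern; apply: (@cvg_prod_seq _ _ _ (fun i (s : state R D) => if x i then s.2 i else 1 - s.2 i) _) => i.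
case: (x i); first exact: cvg_m2.
exact: cvgB' (cvgc _) (cvg_m2 i).
Qed.

Lemma cvg_dbern1 x i : (fun s : state R D => @dbern R D x s.1.2 i) @ FF' --> @dbern R D x mu10 i.
Proof.
rewrite /dbern /Pi; apply: cvgM' (cvgc _).
apply: (@cvg_prod_seq _ _ _ (fun j (s : state R D) => if x j then s.1.2 j else 1 - s.1.2 j) _) => j.
case: (x j); first exact: cvg_m1.
exact: cvgB' (cvgc _) (cvg_m1 j).
Qed.

Lemma cvg_dbern2 x i : (fun s : state R D => @dbern R D x s.2 i) @ FF' --> @dbern R D x xb i.
Proof.
rewrite /dbern /Pi; apply: cvgM' (cvgc _).
apply: (@cvg_prod_seq _ _ _ (fun j (s : state R D) => if x j then s.2 j else 1 - s.2 j) _) => j.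
case: (x j); first exact: cvg_m2.
exact: cvgB' (cvgc _) (cvg_m2 j).
Qed.

Lemma cvg_pm x : (fun s => pm' s x) @ FF' --> pm' s0 x.
Proof.
rewrite /pm /s0 /=.
exact: cvgD' (cvgM' cvg_p1 (cvg_bern1 x))
             (cvgM' (cvgB' (cvgc 1) cvg_p1) (cvg_bern2 x)).
Qed.

Hypothesis hpm0 : forall x, pm' s0 x != 0.

Lemma cvg_G1 : G1' @ FF' --> G1' s0.
Proof.
apply: (@cvg_sum_seq _ _ _ (fun x (s : state R D) => pst x * (bern x s.1.2 / pm' s x)) _) => x.
exact: cvgM' (cvgc _) (cvgM' (cvg_bern1 x) (cvgV' (hpm0 x) (cvg_pm x))).
Qed.

Lemma cvg_G2 : G2' @ FF' --> G2' s0.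
Proof.
apply: (@cvg_sum_seq _ _ _ (fun x (s : state R D) => pst x * (bern x s.2 / pm' s x)) _) => x.
exact: cvgM' (cvgc _) (cvgM' (cvg_bern2 x) (cvgV' (hpm0 x) (cvg_pm x))).
Qed.

Lemma cvg_M1 i : (fun s => M1' s i) @ FF' --> M1' s0 i.
Proof.
apply: (@cvg_sum_seq _ _ _ (fun x (s : state R D) => pst x * (s.1.1 * @dbern R D x s.1.2 i / pm' s x)) _) => x.
exact: cvgM' (cvgc _) (cvgM' (cvgM' cvg_p1 (cvg_dbern1 x i)) (cvgV' (hpm0 x) (cvg_pm x))).
Qed.

Lemma cvg_M2 i : (fun s => M2' s i) @ FF' --> M2' s0 i.
Proof.
apply: (@cvg_sum_seq _ _ _ (fun x (s : state R D) => pst x * ((1 - s.1.1) * @dbern R D x s.2 i / pm' s x)) _) => x.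
exact: cvgM' (cvgc _) (cvgM' (cvgM' (cvgB' (cvgc 1) cvg_p1) (cvg_dbern2 x i)) (cvgV' (hpm0 x) (cvg_pm x))).
Qed.

End Cont.



Section Misc.
Variable R : realType.

Lemma contract (al c y : R) : 0 < al -> al < y * (1 - y) ->
  `|y + al * ((c - y) / (y * (1 - y))) - c| <= (1 - 4 * al) * `|y - c|.
Proof.
move=> hal hP.
set P := y * (1 - y) in hP *.
have hP0 : 0 < P by lra.
have hP4 : P <= 1 / 4 by rewrite /P; have := sqr_ge0 (2 * y - 1); rewrite expr2; nra.
have E : y + al * ((c - y) / P) - c = (y - c) * (1 - al / P) by field; apply/eqP => h; lra.
set k := al / P in E.
have hk : k * P = al by rewrite /k mulfVK //; apply/eqP => h; lra.
have hk0 : 0 < k by rewrite /k divr_gt0.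
have hk1 : k <= 1 by nra.
have hk4 : 4 * al <= k by nra.
rewrite E normrM (@ger0_norm _ (1 - k)); last by lra.
rewrite mulrC; apply: ler_wpM2r; [exact: normr_ge0 | lra].
Qed.

Lemma fin_lt (I : finType) (m : I -> R) :
  (forall i, 0 < m i) -> exists2 c, 0 < c & forall i, c < m i.
Proof.
move=> hm.
suff : forall r : seq I, exists2 c, 0 < c & forall i, i \in r -> c < m i.
  case/(_ (enum I)) => c hc h; exists c => // i; apply: h; by rewrite mem_enum.
elim=> [|a r [c hc h]]; first by exists 1.
exists (Num.min c (m a / 2)).
  rewrite lt_min hc /=; have := hm a; lra.
move=> i; rewrite in_cons => /orP [/eqP ->|hi].
  rewrite gt_min; apply/orP; right; have := hm a; lra.
by rewrite gt_min h.
Qed.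

Lemma arith1 (a z : R) : 0 < a -> z < 1 -> 0 + a * (z - 1) / 2 < 0.
Proof. move=> ha hz; nra. Qed.

Lemma arith2 (a y : R) : 0 < a -> a < y * (1 - y) -> 0 < y < 1.
Proof. move=> ha h; apply/andP; split; nra. Qed.

Lemma arith3 (u E qn e : R) : 0 <= qn -> 0 <= E -> 0 < e -> u <= qn * E ->
  qn < e / (E + 1) -> u < e.
Proof.
move=> hq hE he hu; rewrite ltr_pdivlMr; last by lra.
move=> h; nra.
Qed.

Lemma arith4 (al : R) : 0 < al -> 0 <= 1 - 4 * al -> `|1 - 4 * al| < 1.
Proof. move=> h1 h2; rewrite ger0_norm //; lra. Qed.

Lemma arith5 (al : R) : 0 < al -> 1 - 4 * al <= 1.
Proof. move=> h; lra. Qed.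

End Misc.

Section Main.
Variables (R : realType) (D : nat) (pis : R) (mu1s mu2s : 'I_D -> R) (mu10 : 'I_D -> R).
Hypotheses (hpis : 0 < pis < 1)
    (hmu1s : forall i, 0 <= mu1s i <= 1)
    (hmu2s : forall i, 0 <= mu2s i <= 1)
    (hsigma : forall i j : 'I_D, i != j ->
        4 * pis * (1 - pis) * mustar mu1s mu2s i * mustar mu1s mu2s j != 0)
    (hT : Z1lam pis (lambda pis mu1s mu2s mu10) < 1).

Local Notation xb := (xbar pis mu1s mu2s).
Local Notation FF' := (@FF R D pis mu1s mu2s mu10).
Local Notation close' := (@close R D pis mu1s mu2s mu10).
Local Notation G1' := (@G1 R D pis mu1s mu2s).
Local Notation G2' := (@G2 R D pis mu1s mu2s).
Local Notation M1' := (@M1 R D pis mu1s mu2s).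
Local Notation M2' := (@M2 R D pis mu1s mu2s).
Local Notation pm' := (@pm R D).
Local Notation s0' := (@s0 R D pis mu1s mu2s mu10).
Local Notation step := (gd_step pis mu1s mu2s).
Local Notation cD := (@cvgD' R D pis mu1s mu2s mu10 _ _ _ _).
Local Notation cB := (@cvgB' R D pis mu1s mu2s mu10 _ _ _ _).
Local Notation cM := (@cvgM' R D pis mu1s mu2s mu10 _ _ _ _).
Local Notation cc := (@cvgc R D pis mu1s mu2s mu10).
Local Notation cp1 := (@cvg_p1 R D pis mu1s mu2s mu10).
Local Notation cm1 := (@cvg_m1 R D pis mu1s mu2s mu10).
Local Notation cm2 := (@cvg_m2 R D pis mu1s mu2s mu10).

Lemma mustar_neq0 i : mustar mu1s mu2s i != 0.
Proof.
apply/eqP => h0.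
have hlam : forall j, lambda pis mu1s mu2s mu10 j = 0.
  move=> j; case: (eqVneq j i) => [->|hji]; first by rewrite /lambda h0 mulr0 mul0r.
  by have := hsigma j i hji; rewrite h0 mulr0 eqxx.
have e1 : \prod_(j < D) (1 + (1 - pis) * lambda pis mu1s mu2s mu10 j) = 1.
  by apply: big1 => j _; rewrite hlam mulr0 addr0.
have e2 : \prod_(j < D) (1 - pis * lambda pis mu1s mu2s mu10 j) = 1.
  by apply: big1 => j _; rewrite hlam mulr0 subr0.
by move: hT; rewrite /Z1lam e1 e2; lra.
Qed.

Lemma xb01 j : 0 < xb j < 1.
Proof.
rewrite xbar_eq.
have hne := mustar_neq0 j; move: hne; rewrite /mustar => hne.
have hab : mu1s j != mu2s j by apply: contra hne => /eqP ->; rewrite subrr mul0r.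
have := hmu1s j; have := hmu2s j; case/andP: hpis => hp0 hp1.
move=> /andP [h20 h21] /andP [h10 h11].
case/orP: (lt_total hab) => hlt; apply/andP; split; nra.
Qed.

Lemma hpm0 x : pm' s0' x != 0.
Proof.
rewrite /s0 pm0; apply: lt0r_neq0; apply: bern_gt0; exact: xb01.
Qed.

Lemma proj_zero al (s : state R D) : s.1.1 + al * (G1' s - G2' s) / 2 <= 0 ->
  proj_simplex1 (s.1.1 + al * G1' s) ((1 - s.1.1) + al * G2' s) = 0.
Proof.
move=> h; rewrite /proj_simplex1.
have -> : (s.1.1 + al * G1' s - (1 - s.1.1 + al * G2' s) + 1) / 2 =
          s.1.1 + al * (G1' s - G2' s) / 2 by field.
rewrite min_r; last by lra.
by rewrite max_l.
Qed.


Lemma main_aux :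
  exists2 alpha0 : R, 0 < alpha0 &
  forall alpha : R, 0 < alpha <= alpha0 ->
  exists2 delta : R, 0 < delta &
  forall (pi1 : R) (mu1 mu2 : 'I_D -> R),
    0 <= pi1 < delta ->
    (forall i, 0 <= mu1 i <= 1) -> (forall i, 0 <= mu2 i <= 1) ->
    (forall i, `|mu1 i - mu10 i| < delta) ->
    (forall i, `|mu2 i - xbar pis mu1s mu2s i| < delta) ->
    exists mu1inf mu2inf : 'I_D -> R,
      [/\ (fun n => (gd_iter pis mu1s mu2s alpha n (pi1, mu1, mu2)).1.1) @ \oo --> (0 : R),
          forall i, (fun n => (gd_iter pis mu1s mu2s alpha n (pi1, mu1, mu2)).1.2 i) @ \oo --> mu1inf i
        & forall i, (fun n => (gd_iter pis mu1s mu2s alpha n (pi1, mu1, mu2)).2 i) @ \oo --> mu2inf i].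
Proof.
have hxb := xb01.
have hpos : forall i, 0 < xb i * (1 - xb i).
  by move=> i; have := hxb i; case/andP => ? ?; nra.
have [al0 hal0 hal0m] := @fin_lt R _ _ hpos.
exists al0 => // al /andP [hal hala].
have hq0 : forall i : 'I_D, 0 <= 1 - 4 * al.
  move=> i; have := hal0m i; have := hxb i; case/andP=> ? ?.
  have := sqr_ge0 (2 * xb i - 1); rewrite expr2; nra.
have hFF : Filter FF' by exact: FF_filter.
have A1 : \forall s \near FF', forall x, 0 < pm' s x.
  apply: filter_forall => x.
  apply: (cvgr_gt _ (@cvg_pm R D pis mu1s mu2s mu10 x) 0).
  by rewrite /s0 pm0; apply: bern_gt0.
have A2 : \forall s \near FF', s.1.1 + al * (G1' s - G2' s) / 2 < 0.
  have C := cD cp1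
     (cM (cM (cc al)
        (cB (@cvg_G1 R D pis mu1s mu2s mu10 hpm0) (@cvg_G2 R D pis mu1s mu2s mu10 hpm0)))
        (cc 2^-1)).
  apply: (cvgr_lt _ C 0).
  rewrite /s0 /= (@G1_zero R D pis mu1s mu2s mu10 hxb) (@G2_zero R D pis mu1s mu2s mu10 xb hxb).
  exact: arith1.
have A3 : \forall s \near FF', forall i, al0 < s.2 i * (1 - s.2 i).
  apply: filter_forall => i.
  apply: (cvgr_gt _ (cM (cm2 i) (cB (cc 1) (cm2 i))) al0).
  exact: hal0m.
have hA := @filterI _ _ hFF _ _ A1 (@filterI _ _ hFF _ _ A2 A3).
have [r hr hrA] := @nearFF R D pis mu1s mu2s mu10
  (fun s => (forall x, 0 < pm' s x) /\ (s.1.1 + al * (G1' s - G2' s) / 2 < 0 /\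
             forall i, al0 < s.2 i * (1 - s.2 i))) hA.
have B1 : \forall s \near FF', forall i, `|s.1.2 i + al * M1' s i - mu10 i| < r.
  apply: filter_forall => i.
  have C := cD (cm1 i) (cM (cc al) (@cvg_M1 R D pis mu1s mu2s mu10 hpm0 i)).
  move/cvgrPdist_lt : C => /(_ r hr).
  apply: filterS => s.
  by rewrite /s0 /= (@M1_zero R D pis mu1s mu2s mu10 xb) mulr0 addr0 distrC.
have B2 : \forall s \near FF', forall i, `|s.2 i + al * M2' s i - xb i| < r.
  apply: filter_forall => i.
  have C := cD (cm2 i) (cM (cc al) (@cvg_M2 R D pis mu1s mu2s mu10 hpm0 i)).
  move/cvgrPdist_lt : C => /(_ r hr).
  apply: filterS => s.
  by rewrite /s0 /= (@M2_zero R D pis mu1s mu2s mu10 xb i hxb) subrr mul0r mulr0 addr0 distrC.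
have hB := @filterI _ _ hFF _ _ B1 B2.
have [r' hr' hrB] := @nearFF R D pis mu1s mu2s mu10
  (fun s => (forall i, `|s.1.2 i + al * M1' s i - mu10 i| < r) /\
            (forall i, `|s.2 i + al * M2' s i - xb i| < r)) hB.
exists (Num.min r r'); first by rewrite lt_min hr hr'.
move=> p1 m1 m2 /andP [hp0 hp1] _ _ hm1 hm2.
set sI : state R D := (p1, m1, m2).
have hc : close' (Num.min r r') sI.
  split; first by rewrite /= ger0_norm.
  by split.
have hcr : close' r sI.
  by apply: (@close_le R D pis mu1s mu2s mu10 _ _ _ _ hc); rewrite ge_min lexx.
have hcr' : close' r' sI.
  by apply: (@close_le R D pis mu1s mu2s mu10 _ _ _ _ hc); rewrite ge_min lexx orbT.
have [hposA [hHA hcA]] := hrA _ hcr.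
have [hB1' hB2'] := hrB _ hcr'.
have e1 : step al sI = @estep R D pis mu1s mu2s al sI := @step_eq R D pis mu1s mu2s al sI hposA.
set s1 := @estep R D pis mu1s mu2s al sI in e1.
have hs1 : s1.1.1 = 0 by exact: (proj_zero _ _ (ltW hHA)).
have inv : forall n, (gd_iter pis mu1s mu2s al n.+1 sI).1.1 = 0 /\
   (forall i, (gd_iter pis mu1s mu2s al n.+1 sI).1.2 i = s1.1.2 i) /\
   (forall i, `|(gd_iter pis mu1s mu2s al n.+1 sI).2 i - xb i| <= (1 - 4 * al) ^+ n * `|s1.2 i - xb i|).
  elim=> [|n IH].
    have -> : gd_iter pis mu1s mu2s al 1 sI = step al sI by [].
    rewrite e1; split => //; split => // i; by rewrite expr0 mul1r.
  have -> : gd_iter pis mu1s mu2s al n.+2 sI = step al (gd_iter pis mu1s mu2s al n.+1 sI) by [].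
  move: IH; case: (gd_iter pis mu1s mu2s al n.+1 sI) => [[p m] y] [hp [hm hy]].
  simpl in hp, hm, hy; subst p.
  have hcn : close' r (0, m, y).
    split; first by rewrite normr0.
    split => i /=; first by rewrite hm; exact: hB1' i.
    apply: le_lt_trans (hy i) _; apply: le_lt_trans (hB2' i).
    apply: ler_piMl; first exact: normr_ge0.
    apply: exprn_ile1; [exact: hq0 i | exact: (@arith5 R al hal)].
  have [hposn [hHn hcn2]] := hrA _ hcn.
  rewrite (@step_eq R D pis mu1s mu2s al (0, m, y) hposn).
  have hy01 : forall j, 0 < y j < 1 by move=> j; exact: (@arith2 R _ _ hal0 (hcn2 j)).
  split; first exact: (proj_zero _ _ (ltW hHn)).
  split => i /=.
    by rewrite (@M1_zero R D pis mu1s mu2s m y) mulr0 addr0 hm.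
  rewrite (@M2_zero R D pis mu1s mu2s m y i hy01).
  apply: le_trans (@contract R al (xb i) (y i) hal (le_lt_trans hala (hcn2 i))) _.
  rewrite exprS -mulrA; apply: ler_wpM2l; [exact: hq0 i | exact: hy i].
exists (fun i => s1.1.2 i), xb; split.
- rewrite -cvg_shiftS; apply: cvg_near_cst; apply: nearW => n /=.
  exact: (inv n).1.
- move=> i; rewrite -cvg_shiftS; apply: cvg_near_cst; apply: nearW => n /=.
  exact: (inv n).2.1 i.
- move=> i; rewrite -cvg_shiftS; apply/cvgrPdist_lt => e he.
  have hE0 : 0 <= `|s1.2 i - xb i| by exact: normr_ge0.
  have hq := @arith4 R al hal (hq0 i).
  have hz : 0 < e / (`|s1.2 i - xb i| + 1) by apply: divr_gt0 => //; apply: ltr_wpDl.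
  have H := cvgr_lt _ (cvg_expr hq) _ hz.
  near=> n.
  have hn : (1 - 4 * al) ^+ n < e / (`|s1.2 i - xb i| + 1) by near: n; exact: H.
  have [_ [_ h3]] := inv n.
  rewrite /= distrC; apply: (@arith3 R _ _ _ _ _ _ _ (h3 i) hn) => //.
  apply: exprn_ge0; exact: hq0 i.
Unshelve. all: by end_near.
Qed.

End Main.


Theorem mainTheorem4 (R : realType) (D : nat)
    (pis : R) (mu1s mu2s : 'I_D -> R)
    (hpis : 0 < pis < 1)
    (hmu1s : forall i, 0 <= mu1s i <= 1)
    (hmu2s : forall i, 0 <= mu2s i <= 1)
    (hsigma : forall i j : 'I_D, i != j ->
        4 * pis * (1 - pis) * mustar mu1s mu2s i * mustar mu1s mu2s j != 0)
    (mu10 : 'I_D -> R)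
    (hmu10 : forall i, 0 <= mu10 i <= 1)
    (hT : Z1lam pis (lambda pis mu1s mu2s mu10) < 1) :
  exists2 alpha0 : R, 0 < alpha0 &
  forall alpha : R, 0 < alpha <= alpha0 ->
  exists2 delta : R, 0 < delta &
  forall (pi1 : R) (mu1 mu2 : 'I_D -> R),
    0 <= pi1 < delta ->
    (forall i, 0 <= mu1 i <= 1) -> (forall i, 0 <= mu2 i <= 1) ->
    (forall i, `|mu1 i - mu10 i| < delta) ->
    (forall i, `|mu2 i - xbar pis mu1s mu2s i| < delta) ->
    exists mu1inf mu2inf : 'I_D -> R,
      [/\ (fun n => (gd_iter pis mu1s mu2s alpha n (pi1, mu1, mu2)).1.1) @ \oo --> (0 : R),
          forall i, (fun n => (gd_iter pis mu1s mu2s alpha n (pi1, mu1, mu2)).1.2 i) @ \oo --> mu1inf i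
        & forall i, (fun n => (gd_iter pis mu1s mu2s alpha n (pi1, mu1, mu2)).2 i) @ \oo --> mu2inf i].
Proof.
by apply: main_aux.
Qed.
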